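(* The sets $R_s$, $R_b$, $R_t$ are non-empty. Moreover: (i) $R_s$ contains a neighborhood (relative to $[0,1]^2$) of $\boldsymbol h=(h_1,h_2)$; (ii) $R_b\cap([h_1,1]\times[h_2,1])=\emptyset$; for every $m_1\in[0,1]$ there is $\delta>0$ with $(m_1,\epsilon)\in R_b$ for all $\epsilon\in[0,\delta)$; and for every $m_2\in[0,1]$ there is $\delta>0$ with $(\epsilon,m_2)\in R_b$ for all $\epsilon\in[0,\delta)$; (iii) $R_t\cap([0,h_1)\times[0,h_2))=\emptyset$, and there is $\delta>0$ such that $(1-\epsilon,1-\epsilon)\in R_t$ for all $\epsilon\in[0,\delta)$.
   Context: Fix a cumulative distribution function $F$ on $[0,1]^2$ with a density $f$ that has full support on $[0,1]^2$, a constant $c\in(0,1)$ and $\boldsymbol h=(h_1,h_2)\in(0,1)^2$. For $\boldsymbol x,\boldsymbol y\in[0,1]^2$ write $\boldsymbol x\vee\boldsymbol y=(\max\{x_1,y_1\},\max\{x_2,y_2\})$, and for $F(\boldsymbol x)<1$ let $n(\boldsymbol x)=\frac{1}{c(1-F(\boldsymbol x))}$. For $\boldsymbol m\in[0,1]^2$ define $\bar w_s=F(\boldsymbol h)$, $\bar w_b=n(\boldsymbol m)\big(F(\boldsymbol m\vee\boldsymbol h)-F(\boldsymbol m)\big)$ (with $\bar w_b:=0$ if $F(\boldsymbol m)=1$), $\bar w_t=F(\boldsymbol m\vee\boldsymbol h)-F(\boldsymbol m)/n(\boldsymbol h)$, and the regions $R_s=\{\boldsymbol m\in[0,1]^2:\bar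 w_s\ge\max\{\bar w_b,\bar w_t\}\}$, $R_b=\{\boldsymbol m:\bar w_b>\max\{\bar w_s,\bar w_t\}\}$, $R_t=[0,1]^2\setminus(R_s\cup R_b)$. (Interpretation: these are the maximal wages that single-layer, bottom-automated and top-automated firms can pay when machines rent at $F(\boldsymbol m)$.) *)

(* Defs.v *)
From HB Require Import structures.
From mathcomp Require Import all_boot all_order all_algebra.
From mathcomp Require Import all_classical all_reals all_analysis.
Set Implicit Arguments. Unset Strict Implicit. Unset Printing Implicit Defensive.
Import Order.TTheory GRing.Theory Num.Theory.
Local Open Scope classical_set_scope.
Local Open Scope ring_scope.

Section Defs.
Variable R : realType.

Definition leb2 := ((@lebesgue_measure R) \x (@lebesgue_measure R))%E.

Definition mass (f : R * R -> R) (A : set (R * R)) : \bar R :=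
  (\int[leb2]_(p in A) (f p)%:E)%E.

Definition unit_square : set (R * R) := `[0, 1] `*` `[0, 1].

Definition is_density_on_square (f : R * R -> R) : Prop :=
  [/\ measurable_fun setT f, (forall p, 0 <= f p),
      mass f setT = 1%E & mass f unit_square = 1%E].

Definition full_support (f : R * R -> R) : Prop :=
  forall p, unit_square p -> forall r : R, 0 < r ->
    (0%E < mass f (`]p.1 - r, p.1 + r[ `*` `]p.2 - r, p.2 + r[)%R)%E.

Definition cdf (f : R * R -> R) (x : R * R) : R :=
  fine (mass f (`]-oo, x.1] `*` `]-oo, x.2])).

Definition vee (x y : R * R) : R * R := (Num.max x.1 y.1, Num.max x.2 y.2).

Definition nn (f : R * R -> R) (c : R) (x : R * R) : R :=
  1 / (c * (1 - cdf f x)).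

Definition ws (f : R * R -> R) (h : R * R) : R := cdf f h.

Definition wb (f : R * R -> R) (c : R) (h m : R * R) : R :=
  if cdf f m == 1 then 0
  else nn f c m * (cdf f (vee m h) - cdf f m).

Definition wt (f : R * R -> R) (c : R) (h m : R * R) : R :=
  cdf f (vee m h) - cdf f m / nn f c h.

Definition Rs (f : R * R -> R) (c : R) (h : R * R) : set (R * R) :=
  [set m | unit_square m /\
     Num.max (wb f c h m) (wt f c h m) <= ws f h].

Definition Rb (f : R * R -> R) (c : R) (h : R * R) : set (R * R) :=
  [set m | unit_square m /\
     Num.max (ws f h) (wt f c h m) < wb f c h m].

Definition Rt (f : R * R -> R) (c : R) (h : R * R) : set (R * R) :=
  unit_square `\` (Rs f c h `|` Rb f c h).

End Defs.

(* Main.v *)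
Require Import Defs.
From HB Require Import structures.
From mathcomp Require Import all_boot all_order all_algebra.
From mathcomp Require Import all_classical all_reals all_analysis.
From mathcomp Require Import measurable_realfun.
From mathcomp Require Import ring lra.
Import Order.TTheory GRing.Theory Num.Theory.
Local Open Scope classical_set_scope.
Local Open Scope ring_scope.

Section A.
Variable R : realType.
Lemma alg_wt (Fh A B k eps : R) : 0 < k < 1 -> 0 < Fh -> eps <= Fh*k/4 -> A < Fh + eps -> Fh - eps < B -> A - B*k <= Fh.
Proof. move=> /andP[k0 k1] F0 e1 a1 b1.
have : 0 <= (B - (Fh - eps)) * k by rewrite mulr_ge0 // ?subr_ge0 ltW.
have : 0 <= Fh * k by rewrite mulr_ge0 // ltW.
nra. Qed.
Lemma alg_wb (Fh A B c eps : R) : 0 < c -> 0 < Fh -> eps <= (1-Fh)/2 -> eps <= Fh*(c*(1-Fh))/4 ->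
  A < Fh+eps -> Fh - eps < B -> B < Fh + eps -> (A - B)/(c*(1-B)) <= Fh.
Proof. move=> c0 F0 e1 e2 a1 b1 b2.
have h1 : 0 < 1 - B by lra.
rewrite ler_pdivrMr ?mulr_gt0 //.
have H : 0 <= (1 - B - (1-Fh)/2) * (Fh * c) by rewrite mulr_ge0 // ?mulr_ge0 ?ltW //; lra.
have -> : Fh * (c * (1 - B)) = Fh*(c*(1-Fh))/2 + (1 - B - (1-Fh)/2) * (Fh * c) by field.
lra. Qed.
Lemma alg_b (Fh X B c k : R) : 0 < c < 1 -> 0 < Fh <= X -> X <= 1 -> 0 <= B < Fh * (1 - c) -> 0 <= k ->
  Num.max Fh (X - B * k) < (X - B)/(c*(1-B)).
Proof. move=> /andP[c0 c1] /andP[F0 FX] X1 /andP[B0 B1] k0.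
have Hc : 0 < Fh * c by rewrite mulr_gt0.
have E : Fh * (1 - c) = Fh - Fh * c by ring.
have hB : B < 1 by lra.
have h1 : 0 < 1 - B by lra.
have : X < (X - B)/(c*(1-B)).
  rewrite ltr_pdivlMr ?mulr_gt0 //.
  have : Fh * (1-c) <= X * (1-c) by rewrite ler_pM2r // subr_gt0.
  have : 0 <= X * c * B by rewrite !mulr_ge0 // ltW //; lra.
  nra.
move=> H; rewrite gt_max; apply/andP; split; first lra.
have : 0 <= B * k by rewrite mulr_ge0.
lra. Qed.
Lemma alg_t (Fh Fm c eps : R) : 0 < c < 1 -> 0 < Fh < 1 -> eps = (1-c)*(1-Fh)/2 -> 1 - eps < Fm ->
  Fh < Fm - Fm * (c * (1 - Fh)).
Proof. move=> /andP[c0 c1] /andP[F0 F1] -> Fm1.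
have k0 : 0 <= c * (1 - Fh) by apply: mulr_ge0; lra.
have k1 : c * (1 - Fh) < 1.
  have : c * (1 - Fh) <= 1 * (1 - Fh) by rewrite ler_pM2r ?subr_gt0 // ltW.
  lra.
have e0 : 0 <= (1-c)*(1-Fh)/2 by apply: divr_ge0 => //; apply: mulr_ge0; lra.
have H1 : 0 < (Fm - (1 - (1-c)*(1-Fh)/2)) * (1 - c * (1 - Fh)) by apply: mulr_gt0; lra.
have H2 : 0 <= (1-c)*(1-Fh)/2 * (c * (1 - Fh)) by rewrite mulr_ge0.
have E : (1 - c) * (1 - Fh) = 1 - c - Fh + c * Fh by ring.
have E2 : c * (1 - Fh) = c - c * Fh by ring.
nra. Qed.
End A.

Section S.
Variable R : realType.
Variable f : R * R -> R.
Hypothesis mf : measurable_fun setT f.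
Hypothesis f0 : forall p, 0 <= f p.

Definition dmu (mf : measurable_fun setT f) (f0 : forall p, 0 <= f p) (A : set (R * R)) := mass f A.
Local Notation mu := (dmu mf f0).

Let mu0 : mu set0 = 0%E. Proof. by rewrite /mu /mass integral_set0. Qed.
Let mu_ge0 A : (0 <= mu A)%E. Proof. by apply: integral_ge0 => x _; rewrite lee_fin. Qed.
Let mu_sa : semi_sigma_additive mu.
Proof. have := (@semi_sigma_additive_nng_induced _ _ _ (@leb2 R) (EFin \o f)). move=> H; apply: H; last by move=> x; rewrite lee_fin.
apply/measurable_EFinP. exact: mf. Qed.
HB.instance Definition _ := isMeasure.Build _ _ _ mu mu0 mu_ge0 mu_sa.

Lemma line_null (a : R) : @leb2 R ([set a] `*` setT) = 0%E.
Proof. rewrite /leb2 product_measure1E //. have H := lebesgue_measure_set1 a. by rewrite -[X in (X * _)%E]/(lebesgue_measure [set a]) H mul0e. Qed.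

Lemma line_nullH (a : R) : @leb2 R (setT `*` [set a]) = 0%E.
Proof. rewrite /leb2 product_measure1E //. have H := lebesgue_measure_set1 a. by rewrite -[X in (_ * X)%E]/(lebesgue_measure [set a]) H mule0. Qed.

Lemma mu_mono {A B} : measurable A -> measurable B -> A `<=` B -> (mu A <= mu B)%E.
Proof. by move=> mA mB AB; apply: le_measure; rewrite ?inE. Qed.

Lemma mu_null {N} : measurable N -> @leb2 R N = 0%E -> mu N = 0%E.
Proof. move=> mN N0; apply: null_set_integral => //.
by apply/measurable_EFinP; apply: measurable_funS mf. Qed.

Definition stripV (a d : R) := `[a - d, a + d] `*` [set: R].
Definition stripH (a d : R) := [set: R] `*` `[a - d, a + d].
Lemma strip_meas (a d : R) : measurable (stripV a d).
Proof. by apply: measurableX. Qed.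
Lemma stripH_meas (a d : R) : measurable (stripH a d).
Proof. by apply: measurableX. Qed.

Hypothesis mT : mass f setT = 1%E.

Lemma mu_le1 {A} : measurable A -> (mu A <= 1)%E.
Proof. move=> mA; rewrite -mT; exact: (@mu_mono A setT). Qed.

Lemma mu_fin {A} : measurable A -> mu A \is a fin_num.
Proof. move=> mA; rewrite ge0_fin_numE //. exact: (le_lt_trans (mu_le1 mA) (ltry _)). Qed.

Lemma strip_small (a e : R) : 0 < e -> exists2 d : R, 0 < d & (mu (stripV a d) < e%:E)%E.
Proof.
move=> e0.
pose F n := `[a - n.+1%:R^-1, a + n.+1%:R^-1] `*` [set: R].
have mF n : measurable (F n) by exact: strip_meas.
have capF : \bigcap_n F n `<=` [set a] `*` setT.
  move=> [x y] /= Hx; split => //=.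
  apply/eqP; apply/negPn/negP => xa.
  have xa0 : 0 < `|x - a| by rewrite normr_gt0 subr_eq0.
  have [N _ HN] := near_infty_natSinv_lt (PosNum xa0).
  have := HN N (leqnn N). move: (Hx N I) => /= [/= + _].
  rewrite in_itv /= -ler_distlC distrC => H1 H2.
  by move: (le_lt_trans H1 H2); rewrite ltxx.
have mcap : measurable (\bigcap_n F n) by exact: bigcapT_measurable.
have ninc : nonincreasing_seq F.
  move=> m n mn; apply/subsetPset => -[x y] [/= + _]; rewrite !in_itv /= => /andP[h1 h2]; split => //=.
  have : n.+1%:R^-1 <= m.+1%:R^-1 :> R by rewrite lef_pV2 ?ler_nat ?posrE //.
  move=> hmn; rewrite in_itv /=; apply/andP; split.
    by apply: le_trans h1; rewrite lerD2l lerN2.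
  by apply: le_trans h2 _; rewrite lerD2l.
have H := nonincreasing_cvg_mu (le_lt_trans (mu_le1 (mF 0%N)) (ltry _)) mF mcap ninc.
have cap0 : mu (\bigcap_n F n) = 0%E.
  apply/le_anti/andP; split; last exact: measure_ge0.
  rewrite -(@mu_null ([set a] `*` setT)) ?line_null //; last exact: measurableX.
  by apply: mu_mono => //; exact: measurableX.
have H1 : (fun n => mu (F n)) @ \oo --> mu (\bigcap_n F n) := H.
rewrite cap0 in H1.
have [_ Hf] := (fine_cvgP _ _).1 H1.
have [N _ HN] := cvgr_lt _ Hf _ e0.
exists N.+1%:R^-1; first by rewrite invr_gt0.
have := HN N (leqnn N); rewrite /= -lte_fin fineK //; exact: mu_fin.
Qed.
Lemma stripH_small (a e : R) : 0 < e -> exists2 d : R, 0 < d & (mu (stripH a d) < e%:E)%E.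
Proof.
move=> e0.
pose F n := [set: R] `*` `[a - n.+1%:R^-1, a + n.+1%:R^-1].
have mF n : measurable (F n) by exact: stripH_meas.
have capF : \bigcap_n F n `<=` setT `*` [set a].
  move=> [x y] /= Hx; split => //=.
  apply/eqP; apply/negPn/negP => xa.
  have xa0 : 0 < `|y - a| by rewrite normr_gt0 subr_eq0.
  have [N _ HN] := near_infty_natSinv_lt (PosNum xa0).
  have := HN N (leqnn N). move: (Hx N I) => /= [_ /= +].
  rewrite in_itv /= -ler_distlC distrC => H1 H2.
  by move: (le_lt_trans H1 H2); rewrite ltxx.
have mcap : measurable (\bigcap_n F n) by exact: bigcapT_measurable.
have ninc : nonincreasing_seq F.
  move=> m n mn; apply/subsetPset => -[x y] [/= _ +]; rewrite !in_itv /= => /andP[h1 h2]; split => //=.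
  have : n.+1%:R^-1 <= m.+1%:R^-1 :> R by rewrite lef_pV2 ?ler_nat ?posrE //.
  move=> hmn; rewrite in_itv /=; apply/andP; split.
    by apply: le_trans h1; rewrite lerD2l lerN2.
  by apply: le_trans h2 _; rewrite lerD2l.
have H := nonincreasing_cvg_mu (le_lt_trans (mu_le1 (mF 0%N)) (ltry _)) mF mcap ninc.
have cap0 : mu (\bigcap_n F n) = 0%E.
  apply/le_anti/andP; split; last exact: measure_ge0.
  rewrite -(@mu_null (setT `*` [set a])) ?line_nullH //; last exact: measurableX.
  by apply: mu_mono => //; exact: measurableX.
have H1 : (fun n => mu (F n)) @ \oo --> mu (\bigcap_n F n) := H.
rewrite cap0 in H1.
have [_ Hf] := (fine_cvgP _ _).1 H1.
have [N _ HN] := cvgr_lt _ Hf _ e0.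
exists N.+1%:R^-1; first by rewrite invr_gt0.
have := HN N (leqnn N); rewrite /= -lte_fin fineK //; exact: mu_fin.
Qed.

Hypothesis mS : mass f (@unit_square R) = 1%E.

Definition P A := fine (mu A).
Lemma muE {A} : measurable A -> mu A = (P A)%:E.
Proof. by move=> mA; rewrite /P fineK //; exact: mu_fin. Qed.
Lemma P_ge0 A : 0 <= P A.
Proof. exact: fine_ge0. Qed.
Lemma P_mono {A B} : measurable A -> measurable B -> A `<=` B -> P A <= P B.
Proof. move=> mA mB AB; rewrite -lee_fin -muE // -muE //; exact: mu_mono. Qed.
Lemma P_le1 {A} : measurable A -> P A <= 1.
Proof. move=> mA; rewrite -lee_fin -muE //; exact: mu_le1. Qed.
Lemma P_U2 {A B} : measurable A -> measurable B -> P (A `|` B) <= P A + P B.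
Proof. move=> mA mB; rewrite -lee_fin EFinD -!muE //; last exact: measurableU.
exact: (measureU2 mu mA mB). Qed.
Lemma P_U {A B} : measurable A -> measurable B -> A `&` B = set0 -> P (A `|` B) = P A + P B.
Proof. move=> mA mB AB; have : (mu (A `|` B) = mu A + mu B)%E := measureU mu mA mB AB.
have mU : measurable (A `|` B) by exact: measurableU.
rewrite (muE mA) (muE mB) (muE mU) -EFinD; by case. Qed.
Lemma PT : P setT = 1.
Proof. by rewrite /P /= /dmu mT. Qed.
Lemma sq_meas : measurable (@unit_square R).
Proof. exact: measurableX. Qed.
Lemma P_nsq : P (~` @unit_square R) = 0.
Proof.
have := P_U sq_meas (measurableC sq_meas) (setICr _).
rewrite setUv PT /P /dmu mS /= => H.
by apply: (@addrI _ 1); rewrite addr0 -H.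
Qed.

Definition Q (x : R * R) := `]-oo, x.1] `*` `]-oo, x.2].
Lemma Q_meas x : measurable (Q x).
Proof. exact: measurableX. Qed.
Lemma cdfE x : Defs.cdf f x = P (Q x). Proof. by []. Qed.

Lemma PV_small (a e : R) : 0 < e -> exists2 d : R, 0 < d & forall d', d' <= d -> P (stripV a d') < e.
Proof.
move=> e0; have [d d0 Hd] := strip_small a e e0; exists d => // d' dd.
apply: le_lt_trans (_ : P (stripV a d) < e); last by rewrite -lte_fin -muE //; exact: strip_meas.
apply: P_mono; try exact: strip_meas.
move=> [x y] [/= + _]; rewrite !in_itv /= => /andP[h1 h2]; split => //=.
rewrite in_itv /=; apply/andP; split.
  by apply: le_trans h1; rewrite lerD2l lerN2.
by apply: le_trans h2 _; rewrite lerD2l.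
Qed.

Lemma PH_small (a e : R) : 0 < e -> exists2 d : R, 0 < d & forall d', d' <= d -> P (stripH a d') < e.
Proof.
move=> e0; have [d d0 Hd] := stripH_small a e e0; exists d => // d' dd.
apply: le_lt_trans (_ : P (stripH a d) < e); last by rewrite -lte_fin -muE //; exact: stripH_meas.
apply: P_mono; try exact: stripH_meas.
move=> [x y] [_ /= +]; rewrite !in_itv /= => /andP[h1 h2]; split => //=.
rewrite in_itv /=; apply/andP; split.
  by apply: le_trans h1; rewrite lerD2l lerN2.
by apply: le_trans h2 _; rewrite lerD2l.
Qed.

Local Notation F := (Defs.cdf f).
Lemma F_ge0 x : 0 <= F x. Proof. exact: P_ge0. Qed.
Lemma F_le1 x : F x <= 1. Proof. exact: (P_le1 (Q_meas x)). Qed.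
Lemma F_mono x y : x.1 <= y.1 -> x.2 <= y.2 -> F x <= F y.
Proof.
move=> h1 h2; rewrite !cdfE; apply: P_mono; try exact: Q_meas.
move=> [p1 p2] [/= + +]; rewrite !in_itv /= => a1 a2; split; rewrite /= in_itv /=.
  exact: le_trans h1. exact: le_trans h2.
Qed.

Lemma F_cont (a : R * R) e : 0 < e -> exists2 d : R, 0 < d & forall m : R * R,
  `|m.1 - a.1| < d -> `|m.2 - a.2| < d -> `|F m - F a| < e.
Proof.
move=> e0; have e20 : 0 < e / 2 by rewrite divr_gt0.
have [d1 d10 H1] := PV_small a.1 _ e20.
have [d2 d20 H2] := PH_small a.2 _ e20.
exists (Num.min d1 d2); first by rewrite lt_min d10 d20.
move=> m m1 m2.
have hV := H1 (Num.min d1 d2) (ltac:(by rewrite ge_min lexx)).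
have hH := H2 (Num.min d1 d2) (ltac:(by rewrite ge_min lexx orbT)).
set d := Num.min d1 d2 in m1 m2 hV hH.
have mVH : measurable (stripV a.1 d `|` stripH a.2 d).
  by apply: measurableU; [exact: strip_meas | exact: stripH_meas].
have PVH := P_U2 (strip_meas a.1 d) (stripH_meas a.2 d).
have d0 : 0 < d by rewrite lt_min d10 d20.
move: m1 m2; rewrite !ltr_norml => /andP[m1a m1b] /andP[m2a m2b].
have le1 : F m <= F a + (P (stripV a.1 d) + P (stripH a.2 d)).
  rewrite !cdfE; have := P_U2 (Q_meas a) mVH.
  suff : P (Q m) <= P (Q a `|` (stripV a.1 d `|` stripH a.2 d)) by lra.
  apply: P_mono; [exact: Q_meas | exact: measurableU (Q_meas a) mVH |].
  move=> [p1 p2] [/= + +]; rewrite !in_itv /= => b1 b2.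
  case: (lerP p1 a.1) => c1; case: (lerP p2 a.2) => c2.
  - by left; split; rewrite /= in_itv.
  - by right; right; split => //=; rewrite in_itv /=; apply/andP; split; lra.
  - by right; left; split => //=; rewrite in_itv /=; apply/andP; split; lra.
  - by right; left; split => //=; rewrite in_itv /=; apply/andP; split; lra.
have le2 : F a <= F m + (P (stripV a.1 d) + P (stripH a.2 d)).
  rewrite !cdfE; have := P_U2 (Q_meas m) mVH.
  suff : P (Q a) <= P (Q m `|` (stripV a.1 d `|` stripH a.2 d)) by lra.
  apply: P_mono; [exact: Q_meas | exact: measurableU (Q_meas m) mVH |].
  move=> [p1 p2] [/= + +]; rewrite !in_itv /= => b1 b2.
  case: (lerP p1 m.1) => c1; case: (lerP p2 m.2) => c2.
  - by left; split; rewrite /= in_itv.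
  - by right; right; split => //=; rewrite in_itv /=; apply/andP; split; lra.
  - by right; left; split => //=; rewrite in_itv /=; apply/andP; split; lra.
  - by right; left; split => //=; rewrite in_itv /=; apply/andP; split; lra.
apply/andP; split; lra.
Qed.


Lemma F_low2 e : 0 < e -> exists2 d : R, 0 < d & forall x : R * R, x.2 < d -> F x < e.
Proof.
move=> e0; have [d d0 Hd] := PH_small 0 _ e0; exists d => // x xd.
have hH := Hd d (lexx _).
have := P_U2 (measurableC sq_meas) (stripH_meas 0 d); rewrite P_nsq.
suff : F x <= P (~` @unit_square R `|` stripH 0 d) by lra.
rewrite cdfE; apply: P_mono; [exact: Q_meas| apply: measurableU; [exact: measurableC sq_meas| exact: stripH_meas]|].
move=> [p1 p2] [/= _ +]; rewrite in_itv /= => b2.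
case: (pselect (@unit_square R (p1, p2))) => [[/= _ +]|]; last by left.
rewrite in_itv /= => /andP[c1 c2]; right; split => //=; rewrite in_itv /=; apply/andP; split; lra.
Qed.

Lemma F_low1 e : 0 < e -> exists2 d : R, 0 < d & forall x : R * R, x.1 < d -> F x < e.
Proof.
move=> e0; have [d d0 Hd] := PV_small 0 _ e0; exists d => // x xd.
have hH := Hd d (lexx _).
have := P_U2 (measurableC sq_meas) (strip_meas 0 d); rewrite P_nsq.
suff : F x <= P (~` @unit_square R `|` stripV 0 d) by lra.
rewrite cdfE; apply: P_mono; [exact: Q_meas| apply: measurableU; [exact: measurableC sq_meas| exact: strip_meas]|].
move=> [p1 p2] [/= + _]; rewrite in_itv /= => b2.
case: (pselect (@unit_square R (p1, p2))) => [[/= + _]|]; last by left.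
rewrite in_itv /= => /andP[c1 c2]; right; split => //=; rewrite in_itv /=; apply/andP; split; lra.
Qed.

Lemma F_top e : 0 < e -> exists2 d : R, 0 < d & forall x : R * R,
  1 - d < x.1 -> 1 - d < x.2 -> 1 - e < F x.
Proof.
move=> e0; have e20 : 0 < e / 2 by rewrite divr_gt0.
have [d1 d10 H1] := PV_small 1 _ e20.
have [d2 d20 H2] := PH_small 1 _ e20.
exists (Num.min d1 d2); first by rewrite lt_min d10 d20.
move=> x x1 x2.
have hV := H1 (Num.min d1 d2) (ltac:(by rewrite ge_min lexx)).
have hH := H2 (Num.min d1 d2) (ltac:(by rewrite ge_min lexx orbT)).
set d := Num.min d1 d2 in x1 x2 hV hH.
have mVH : measurable (stripV 1 d `|` stripH 1 d).
  by apply: measurableU; [exact: strip_meas | exact: stripH_meas].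
have mN : measurable (~` @unit_square R) by exact: measurableC sq_meas.
have := P_U2 (strip_meas 1 d) (stripH_meas 1 d).
have := P_U2 (Q_meas x) mVH.
have mQV : measurable (Q x `|` (stripV 1 d `|` stripH 1 d)) by exact: measurableU (Q_meas x) mVH.
have := P_U2 mQV mN.
rewrite P_nsq cdfE.
suff : 1 <= P ((Q x `|` (stripV 1 d `|` stripH 1 d)) `|` ~` @unit_square R) by lra.
have mU : measurable ((Q x `|` (stripV 1 d `|` stripH 1 d)) `|` ~` @unit_square R) by exact: measurableU mQV mN.
suff SUB : [set: R * R] `<=` (Q x `|` (stripV 1 d `|` stripH 1 d)) `|` ~` @unit_square R.
  by have := P_mono measurableT mU SUB; rewrite PT.
move=> [p1 p2] _.
case: (pselect (@unit_square R (p1, p2))) => [[/= +  +]|]; last by right.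
rewrite !in_itv /= => /andP[c1 c2] /andP[c3 c4]; left.
case: (lerP p1 x.1) => e1; case: (lerP p2 x.2) => e2.
- by left; split; rewrite /= in_itv.
- by right; right; split => //=; rewrite in_itv /=; apply/andP; split; lra.
- by right; left; split => //=; rewrite in_itv /=; apply/andP; split; lra.
- by right; left; split => //=; rewrite in_itv /=; apply/andP; split; lra.
Qed.

Hypothesis fs : full_support f.
Definition box (p : R * R) (r : R) := `]p.1 - r, p.1 + r[ `*` `]p.2 - r, p.2 + r[.
Lemma box_meas p r : measurable (box p r). Proof. exact: measurableX. Qed.
Lemma box_pos p r : @unit_square R p -> 0 < r -> 0 < P (box p r).
Proof. move=> sp r0; have := fs p sp r r0; rewrite -[mass f _]/(mu (box p r)) (muE (box_meas p r)) lte_fin. done. Qed.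

Lemma F_pos (h : R * R) : 0 < h.1 <= 1 -> 0 < h.2 <= 1 -> 0 < F h.
Proof.
move=> /andP[h1 h1'] /andP[h2 h2'].
pose p := (h.1 / 2, h.2 / 2); pose r := Num.min h.1 h.2 / 2.
have r0 : 0 < r by rewrite divr_gt0 // lt_min h1 h2.
have rh1 : r <= h.1 / 2 by rewrite ler_pM2r ?invr_gt0 // ge_min lexx.
have rh2 : r <= h.2 / 2 by rewrite ler_pM2r ?invr_gt0 // ge_min lexx orbT.
have sp : @unit_square R p by split; rewrite /= in_itv /=; apply/andP; split; lra.
apply: lt_le_trans (box_pos p r sp r0) _.
rewrite cdfE; apply: P_mono; [exact: box_meas | exact: Q_meas |].
move=> [x y] [/= + +]; rewrite !in_itv /= => /andP[a1 a2] /andP[a3 a4].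
by split; rewrite /= in_itv /=; lra.
Qed.

Lemma F_lt1 (h : R * R) : h.1 < 1 -> h.2 < 1 -> F h < 1.
Proof.
move=> h1 h2.
pose p : R * R := (1, 1); pose r := Num.min (1 - h.1) (1 - h.2).
have r0 : 0 < r by rewrite lt_min !subr_gt0 h1 h2.
have rh1 : r <= 1 - h.1 by rewrite ge_min lexx.
have rh2 : r <= 1 - h.2 by rewrite ge_min lexx orbT.
have sp : @unit_square R p by split; rewrite /= in_itv /=; apply/andP; split; lra.
have := box_pos p r sp r0.
have dis : Q h `&` box p r = set0.
  apply/seteqP; split => // -[x y] [[/= + _] [/= + _]]; rewrite !in_itv /= => a1 /andP[a2 _].
  lra.
have := P_U (Q_meas h) (box_meas p r) dis.
have := P_le1 (measurableU _ _ (Q_meas h) (box_meas p r)).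
rewrite cdfE; lra.
Qed.

Variables (c : R) (h : R * R).
Hypothesis hc : 0 < c < 1.
Hypothesis hh1 : 0 < h.1 < 1.
Hypothesis hh2 : 0 < h.2 < 1.

Lemma Fh0 : 0 < F h.
Proof. move: hh1 hh2 => /andP[? ?] /andP[? ?]; apply: F_pos; apply/andP; split; lra. Qed.
Lemma Fh1 : F h < 1.
Proof. by apply: F_lt1; [case/andP: hh1 | case/andP: hh2]. Qed.

Lemma wt_eq m : wt f c h m = F (vee m h) - F m * (c * (1 - F h)).
Proof. by rewrite /wt /nn div1r invrK. Qed.
Lemma wb_eq m : F m != 1 -> wb f c h m = (F (vee m h) - F m) / (c * (1 - F m)).
Proof. by move=> H; rewrite /wb (negbTE H) /nn div1r mulrC. Qed.
Lemma wb_F1 m : F m = 1 -> wb f c h m = 0.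
Proof. by move=> H; rewrite /wb H eqxx. Qed.

Lemma notRb_up m : h.1 <= m.1 -> h.2 <= m.2 -> ~ Rb f c h m.
Proof.
move=> a1 a2 [_]; have hv : vee m h = m by rewrite /vee max_l // max_l //; case: m a1 a2.
have -> : wb f c h m = 0.
  case: (eqVneq (F m) 1) => H; first exact: wb_F1.
  by rewrite wb_eq // hv subrr mul0r.
rewrite gt_max /ws => /andP[H _]; have := Fh0; lra.
Qed.

Lemma max_dist (x y : R) : `|Num.max x y - y| <= `|x - y|.
Proof. by case: (leP x y) => H; rewrite ?subrr ?normr0. Qed.

Lemma part_i : exists2 d : R, 0 < d & forall m, @unit_square R m ->
  `|m.1 - h.1| < d -> `|m.2 - h.2| < d -> Rs f c h m.
Proof.
have F0 := Fh0; have F1 := Fh1.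
move: hc => /andP[c0 c1].
set k := c * (1 - F h).
have k0 : 0 < k by rewrite mulr_gt0 // subr_gt0.
have k1 : k < 1.
  have : k <= 1 * (1 - F h) by rewrite ler_pM2r ?subr_gt0 // ltW.
  lra.
pose eps := Num.min ((1 - F h) / 2) (F h * k / 4).
have eps0 : 0 < eps by rewrite lt_min !divr_gt0 ?mulr_gt0 ?subr_gt0.
have e1 : eps <= (1 - F h) / 2 by rewrite ge_min lexx.
have e2 : eps <= F h * k / 4 by rewrite ge_min lexx orbT.
have [d d0 Hd] := F_cont h _ eps0.
exists d => // m sm m1 m2; split => //.
have HA := Hd (vee m h) (le_lt_trans (max_dist _ _) m1) (le_lt_trans (max_dist _ _) m2).
have HB := Hd m m1 m2.
move: HA HB; rewrite !ltr_norml => /andP[a1 a2] /andP[b1 b2].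
rewrite ge_max /ws; apply/andP; split.
  case: (eqVneq (F m) 1) => H; first by rewrite wb_F1 // ltW.
  rewrite wb_eq //; apply: (@alg_wb R (F h) (F (vee m h)) (F m) c eps) => //; lra.
rewrite wt_eq; apply: (@alg_wt R (F h) (F (vee m h)) (F m) k eps) => //; try lra.
Qed.

Lemma part_ii2 m1 : 0 <= m1 <= 1 -> exists2 d : R, 0 < d &
  forall e, 0 <= e < d -> Rb f c h (m1, e).
Proof.
move=> /andP[m10 m11].
have F0 := Fh0; have F1 := Fh1.
move: hc hh1 hh2 => /andP[c0 c1] /andP[h10 h11] /andP[h20 h21].
have eps0 : 0 < F h * (1 - c) by rewrite mulr_gt0 // subr_gt0.
have [d d0 Hd] := F_low2 _ eps0.
exists (Num.min d h.2); first by rewrite lt_min d0 h20.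
move=> e /andP[e0]; rewrite lt_min => /andP[ed eh].
have hv : vee (m1, e) h = (Num.max m1 h.1, h.2) by rewrite /vee /= (max_r (ltW eh)).
have HB := Hd (m1, e) ed.
have HX : F h <= F (Num.max m1 h.1, h.2) by apply: F_mono => //=; rewrite le_max lexx orbT.
split; first by split; rewrite /= in_itv /=; apply/andP; split => //; lra.
have Bn1 : F (m1, e) != 1.
  have : F h * (1 - c) < 1.
    have : F h * (1 - c) <= F h * 1 by rewrite ler_pM2l // lerBlDr lerDl ltW.
    lra.
  by move=> H; apply/eqP => E; rewrite E in HB; lra.
rewrite wb_eq // wt_eq /ws hv.
apply: alg_b.
- by apply/andP.
- by apply/andP.
- exact: F_le1.
- by apply/andP; split; [exact: F_ge0|].
- apply: mulr_ge0; lra.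
Qed.

Lemma part_ii3 m2 : 0 <= m2 <= 1 -> exists2 d : R, 0 < d &
  forall e, 0 <= e < d -> Rb f c h (e, m2).
Proof.
move=> /andP[m20 m21].
have F0 := Fh0; have F1 := Fh1.
move: hc hh1 hh2 => /andP[c0 c1] /andP[h10 h11] /andP[h20 h21].
have eps0 : 0 < F h * (1 - c) by rewrite mulr_gt0 // subr_gt0.
have [d d0 Hd] := F_low1 _ eps0.
exists (Num.min d h.1); first by rewrite lt_min d0 h10.
move=> e /andP[e0]; rewrite lt_min => /andP[ed eh].
have hv : vee (e, m2) h = (h.1, Num.max m2 h.2) by rewrite /vee /= (max_r (ltW eh)).
have HB := Hd (e, m2) ed.
have HX : F h <= F (h.1, Num.max m2 h.2) by apply: F_mono => //=; rewrite le_max lexx orbT.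
split; first by split; rewrite /= in_itv /=; apply/andP; split => //; lra.
have Bn1 : F (e, m2) != 1.
  have : F h * (1 - c) < 1.
    have : F h * (1 - c) <= F h * 1 by rewrite ler_pM2l // lerBlDr lerDl ltW.
    lra.
  by move=> H; apply/eqP => E; rewrite E in HB; lra.
rewrite wb_eq // wt_eq /ws hv.
apply: alg_b.
- by apply/andP.
- by apply/andP.
- exact: F_le1.
- by apply/andP; split; [exact: F_ge0|].
- apply: mulr_ge0; lra.
Qed.

Lemma part_iii1 m : 0 <= m.1 < h.1 -> 0 <= m.2 < h.2 -> ~ Rt f c h m.
Proof.
move=> /andP[a1 b1] /andP[a2 b2] [_ nRsb]; apply: nRsb.
have F0 := Fh0; have F1 := Fh1.
move: hc hh1 hh2 => /andP[c0 c1] /andP[h10 h11] /andP[h20 h21].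
have sm : @unit_square R m by split; rewrite /= in_itv /=; apply/andP; split; lra.
have hv : vee m h = h by rewrite /vee (max_r (ltW b1)) (max_r (ltW b2)); case: h {F0 F1 h10 h11 h20 h21 b1 b2}.
have wtle : wt f c h m <= F h.
  rewrite wt_eq hv; have : 0 <= F m * (c * (1 - F h)).
    by apply: mulr_ge0; [exact: F_ge0 | apply: mulr_ge0; lra].
  lra.
case: (eqVneq (F m) 1) => H.
  left; split => //; rewrite ge_max /ws wtle andbT wb_F1 //; lra.
case: (lerP (wb f c h m) (F h)) => H2.
  by left; split => //; rewrite ge_max /ws wtle H2.
by right; split => //; rewrite gt_max /ws H2 /=; lra.
Qed.

Lemma part_iii2 : exists2 d : R, 0 < d &
  forall e, 0 <= e < d -> Rt f c h (1 - e, 1 - e).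
Proof.
have F0 := Fh0; have F1 := Fh1.
move: hc hh1 hh2 => /andP[c0 c1] /andP[h10 h11] /andP[h20 h21].
pose eps := (1 - c) * (1 - F h) / 2.
have eps0 : 0 < eps by apply: divr_gt0 => //; apply: mulr_gt0; lra.
have [d d0 Hd] := F_top _ eps0.
exists (Num.min d (Num.min (1 - h.1) (1 - h.2))).
  by rewrite !lt_min d0 !subr_gt0 h11 h21.
move=> e /andP[e0]; rewrite !lt_min => /andP[ed /andP[e1 e2]].
have sm : @unit_square R (1 - e, 1 - e) by split; rewrite /= in_itv /=; apply/andP; split; lra.
split => // -[[_ HRs]|HRb]; last first.
  by apply: (notRb_up (1 - e, 1 - e) _ _ HRb); simpl; lra.
have hv : vee (1 - e, 1 - e) h = (1 - e, 1 - e).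
  have q1 : h.1 <= 1 - e by lra.
  have q2 : h.2 <= 1 - e by lra.
  by rewrite /vee /= (max_l q1) (max_l q2).
move: HRs; rewrite ge_max /ws => /andP[_].
rewrite wt_eq hv.
have HF := Hd (1 - e, 1 - e) ltac:(simpl; lra) ltac:(simpl; lra).
have := @alg_t R (F h) (F (1 - e, 1 - e)) c eps ltac:(by apply/andP) ltac:(by apply/andP) erefl HF.
lra.
Qed.

Lemma main_conj :
  [/\ [/\ Rs f c h !=set0, Rb f c h !=set0 & Rt f c h !=set0],
      (exists2 d : R, 0 < d & forall m, unit_square m ->
          `|m.1 - h.1| < d -> `|m.2 - h.2| < d -> Rs f c h m),
      [/\ (forall m, h.1 <= m.1 <= 1 -> h.2 <= m.2 <= 1 -> ~ Rb f c h m),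
          (forall m1, 0 <= m1 <= 1 -> exists2 d : R, 0 < d &
              forall e, 0 <= e < d -> Rb f c h (m1, e)) &
          (forall m2, 0 <= m2 <= 1 -> exists2 d : R, 0 < d &
              forall e, 0 <= e < d -> Rb f c h (e, m2))] &
      ((forall m, 0 <= m.1 < h.1 -> 0 <= m.2 < h.2 -> ~ Rt f c h m) /\
       (exists2 d : R, 0 < d &
          forall e, 0 <= e < d -> Rt f c h (1 - e, 1 - e)))].
Proof.
have [d d0 Hi] := part_i.
split.
- split.
  + exists h; apply: Hi; rewrite ?subrr ?normr0 //.
    by move: hh1 hh2 => /andP[? ?] /andP[? ?]; split; rewrite /= in_itv /=; apply/andP; split; lra.
  + have [d' d0' H'] := part_ii2 0 ltac:(by rewrite lexx ler01).
    by exists (0, 0); apply: H'; rewrite lexx d0'.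
  + have [d' d0' H'] := part_iii2.
    by exists (1 - 0, 1 - 0); apply: H'; rewrite lexx d0'.
- by exists d.
- split.
  + by move=> m /andP[a _] /andP[b _]; exact: notRb_up.
  + exact: part_ii2.
  + exact: part_ii3.
- split; [exact: part_iii1 | exact: part_iii2].
Qed.
End S.


Theorem proposition2 (R : realType) (f : R * R -> R) (c : R) (h : R * R) :
  is_density_on_square f -> full_support f ->
  0 < c < 1 -> 0 < h.1 < 1 -> 0 < h.2 < 1 ->
  [/\ [/\ Rs f c h !=set0, Rb f c h !=set0 & Rt f c h !=set0],
      (* (i) *)
      (exists2 d : R, 0 < d & forall m, unit_square m ->
          `|m.1 - h.1| < d -> `|m.2 - h.2| < d -> Rs f c h m),
      (* (ii) *)
      [/\ (forall m, h.1 <= m.1 <= 1 -> h.2 <= m.2 <= 1 -> ~ Rb f c h m),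
          (forall m1, 0 <= m1 <= 1 -> exists2 d : R, 0 < d &
              forall e, 0 <= e < d -> Rb f c h (m1, e)) &
          (forall m2, 0 <= m2 <= 1 -> exists2 d : R, 0 < d &
              forall e, 0 <= e < d -> Rb f c h (e, m2))] &
      (* (iii) *)
      ((forall m, 0 <= m.1 < h.1 -> 0 <= m.2 < h.2 -> ~ Rt f c h m) /\
       (exists2 d : R, 0 < d &
          forall e, 0 <= e < d -> Rt f c h (1 - e, 1 - e)))].
Proof.
move=> [mf f0 mT mS] fs hc hh1 hh2.
exact: (@main_conj R f mf f0 mT mS fs c h hc hh1 hh2).
Qed.
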